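(* For every $n\in\mathbb{N}$ there exists a map $\bar\Gamma\to\Gamma$, $f\mapsto\varphi_n^f$, such that $\varphi_n^{f+n^{-1}\lfloor nc\rfloor}=\varphi_n^f+\lfloor nc\rfloor$ for all $c\in\mathbb{R}$ and $f\in\bar\Gamma$, and $$\sup_{(x,y)\in\mathbb{R}^2}\Big|\tfrac1n\varphi_n^f(nx,\lfloor ny\rfloor)-f(x,y)\Big|\le\frac2n .$$
   Context: $\Gamma$ is the set of functions $h:\mathbb{R}\times\mathbb{Z}\to\mathbb{Z}$ such that (i) for every $y\in\mathbb{Z}$, $x\mapsto h(x,y)$ is piecewise constant with a locally finite set of jumps, each of size $\pm1$, and is upper semicontinuous; (ii) for every $x\in\mathbb{R}$, $y\in\mathbb{Z}$, $h(x,y+1)-h(x,y)\in\{-1,0\}$. $\bar\Gamma$ is the set of continuous $f:\mathbb{R}^2\to\mathbb{R}$ with $f(x,y_2)-f(x,y_1)\in[-(y_2-y_1),0]$ for all $x\in\mathbb{R}$ and $y_1\le y_2$. *)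

(* Defs.v *)
From Stdlib Require Import Reals ZArith Lra.
From Coquelicot Require Import Coquelicot.
Open Scope R_scope.

Definition zfloor (r : R) : Z := Int_part r.

(* Piecewise constant with locally finite jumps, each of size +-1:
   around every point x, g is constant (value L) on a left punctured
   neighbourhood and constant (value R') on a right punctured neighbourhood,
   the two values differ by at most 1 (a jump of size +-1 or no jump), and
   the value at x is one of them. *)
Definition pw_const_unit_jumps (g : R -> Z) : Prop :=
  forall x : R, exists (eps : R) (L Rv : Z), 0 < eps /\
    (forall x', x - eps < x' < x -> g x' = L) /\
    (forall x', x < x' < x + eps -> g x' = Rv) /\
    (Z.abs (L - Rv) <= 1)%Z /\
    (g x = L \/ g x = Rv).

Definition usc (g : R -> Z) : Prop :=
  forall (x t : R), IZR (g x) < t ->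
    exists delta, 0 < delta /\
      forall x', Rabs (x' - x) < delta -> IZR (g x') < t.

Definition Gamma (h : R -> Z -> Z) : Prop :=
  (forall y : Z, pw_const_unit_jumps (fun x => h x y) /\ usc (fun x => h x y)) /\
  (forall (x : R) (y : Z), (h x (y + 1) - h x y = -1 \/ h x (y + 1) - h x y = 0)%Z).

Definition Gammabar (f : R -> R -> R) : Prop :=
  (forall x y : R, continuity_2d_pt f x y) /\
  (forall x y1 y2 : R, y1 <= y2 ->
     - (y2 - y1) <= f x y2 - f x y1 <= 0).

(* Main.v *)
Require Import Defs.
From Stdlib Require Import Reals ZArith Lra Lia ClassicalEpsilon FunctionalExtensionality.
From Coquelicot Require Import Coquelicot.
Open Scope R_scope.

Lemma zfloor_spec r : IZR (zfloor r) <= r < IZR (zfloor r) + 1.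
Proof. unfold zfloor. destruct (base_Int_part r). lra. Qed.

Lemma zfloor_unique k r : IZR k <= r < IZR k + 1 -> zfloor r = k.
Proof.
  intros H. destruct (zfloor_spec r) as [H1 H2].
  assert (A: IZR (zfloor r) < IZR (k+1)) by (rewrite plus_IZR; simpl; lra).
  assert (B: IZR k < IZR (zfloor r + 1)) by (rewrite plus_IZR; simpl; lra).
  apply lt_IZR in A. apply lt_IZR in B. lia.
Qed.

Lemma zfloor_plus r k : zfloor (r + IZR k) = (zfloor r + k)%Z.
Proof.
  apply zfloor_unique. destruct (zfloor_spec r). rewrite plus_IZR. lra.
Qed.

Lemma zfloor_mono r s : r <= s -> (zfloor r <= zfloor s)%Z.
Proof.
  intros H. destruct (zfloor_spec r), (zfloor_spec s).
  assert (A: IZR (zfloor r) < IZR (zfloor s + 1)) by (rewrite plus_IZR; simpl; lra).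
  apply lt_IZR in A. lia.
Qed.

Lemma zfloor_IZR k : zfloor (IZR k) = k.
Proof. apply zfloor_unique. lra. Qed.

Lemma zfloor_lt k r : (zfloor r < k)%Z -> r < IZR k.
Proof.
  intros H. destruct (zfloor_spec r). assert (IZR (zfloor r + 1) <= IZR k) by (apply IZR_le; lia).
  rewrite plus_IZR in H2. simpl in H2. lra.
Qed.

Lemma zfloor_ge k r : IZR k <= r -> (k <= zfloor r)%Z.
Proof. intros H. rewrite <- (zfloor_IZR k). apply zfloor_mono; auto. Qed.

Lemma zfloor_min a b : zfloor (Rmin a b) = Z.min (zfloor a) (zfloor b).
Proof.
  unfold Rmin. destruct (Rle_dec a b).
  - pose proof (zfloor_mono _ _ r). lia.
  - assert (b <= a) by lra. pose proof (zfloor_mono _ _ H). lia.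
Qed.

Lemma zfloor_max a b : zfloor (Rmax a b) = Z.max (zfloor a) (zfloor b).
Proof.
  unfold Rmax. destruct (Rle_dec a b).
  - pose proof (zfloor_mono _ _ r). lia.
  - assert (b <= a) by lra. pose proof (zfloor_mono _ _ H). lia.
Qed.

Lemma floor_right c : exists eta k, 0 < eta /\ forall r, c < r < c + eta -> zfloor r = k.
Proof.
  destruct (zfloor_spec c). exists (IZR (zfloor c) + 1 - c), (zfloor c). split. lra.
  intros r Hr. apply zfloor_unique. lra.
Qed.

Lemma floor_left c : exists eta k, 0 < eta /\ forall r, c - eta < r < c -> zfloor r = k.
Proof.
  destruct (zfloor_spec c). destruct (Req_dec c (IZR (zfloor c))) as [E|E].
  - exists 1, (zfloor c - 1)%Z. split. lra. intros r Hr. apply zfloor_unique.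
    rewrite minus_IZR. simpl. lra.
  - exists (c - IZR (zfloor c)), (zfloor c). split. lra. intros r Hr. apply zfloor_unique. lra.
Qed.

Lemma floor_affine c s : exists eta k, 0 < eta /\ forall t, 0 < t < eta -> zfloor (c + s * t) = k.
Proof.
  destruct (Rtotal_order s 0) as [Hs|[Hs|Hs]].
  - destruct (floor_left c) as [e [k [He Hk]]]. exists (e / (- s)), k. split.
    apply Rdiv_lt_0_compat; lra. intros t Ht. apply Hk.
    assert (- s * t < e). { destruct Ht as [_ Ht]. apply (Rmult_lt_compat_l (-s)) in Ht; [|lra].
      field_simplify in Ht; lra. }
    assert (0 < -s * t) by (apply Rmult_lt_0_compat; lra). lra.
  - subst. exists 1, (zfloor c). split. lra. intros. f_equal. ring.
  - destruct (floor_right c) as [e [k [He Hk]]]. exists (e / s), k. split.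
    apply Rdiv_lt_0_compat; lra. intros t Ht. apply Hk.
    assert (s * t < e). { destruct Ht as [_ Ht]. apply (Rmult_lt_compat_l s) in Ht; [|lra].
      field_simplify in Ht; lra. }
    assert (0 < s * t) by (apply Rmult_lt_0_compat; lra). lra.
Qed.

Lemma Rabs_le_inv a b : Rabs a <= b -> - b <= a <= b.
Proof. unfold Rabs. destruct (Rcase_abs a); lra. Qed.
Lemma Rabs_lt_inv a b : Rabs a < b -> - b < a < b.
Proof. unfold Rabs. destruct (Rcase_abs a); lra. Qed.
Lemma Rabs_lt_intro a b : - b < a < b -> Rabs a < b.
Proof. unfold Rabs. destruct (Rcase_abs a); lra. Qed.

Definition Good (G : R -> R) : Prop :=
  (forall x e, 0 < e -> exists d, 0 < d /\ forall x', Rabs (x' - x) < d -> Rabs (G x' - G x) < e) /\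
  (forall x, exists eps L Rv, 0 < eps /\
     (forall x', x - eps < x' < x -> zfloor (G x') = L) /\
     (forall x', x < x' < x + eps -> zfloor (G x') = Rv)).

Lemma Good_ext G1 G2 : (forall x, G1 x = G2 x) -> Good G1 -> Good G2.
Proof.
  intros E [C F]. split.
  - intros x e He. destruct (C x e He) as [d [Hd H]]. exists d. split; auto.
    intros. rewrite <- !E. auto.
  - intros x. destruct (F x) as [eps [L [Rv [H1 [H2 H3]]]]]. exists eps, L, Rv.
    repeat split; auto; intros; rewrite <- E; auto.
Qed.

Lemma Good_plus G k : Good G -> Good (fun x => G x + IZR k).
Proof.
  intros [C F]. split.
  - intros x e He. destruct (C x e He) as [d [Hd H]]. exists d. split; auto.
    intros. replace (G x' + IZR k - (G x + IZR k)) with (G x' - G x) by ring. auto.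
  - intros x. destruct (F x) as [eps [L [Rv [H1 [H2 H3]]]]]. exists eps, (L + k)%Z, (Rv + k)%Z.
    repeat split; auto; intros; rewrite zfloor_plus; f_equal; auto.
Qed.

Lemma Rabs_min_le a b a' b' e : Rabs (a - a') < e -> Rabs (b - b') < e -> Rabs (Rmin a b - Rmin a' b') < e.
Proof.
  intros H1 H2. apply Rabs_def2 in H1. apply Rabs_def2 in H2. apply Rabs_def1;
  unfold Rmin; destruct (Rle_dec a b); destruct (Rle_dec a' b'); lra.
Qed.

Lemma Rabs_max_le a b a' b' e : Rabs (a - a') < e -> Rabs (b - b') < e -> Rabs (Rmax a b - Rmax a' b') < e.
Proof.
  intros H1 H2. apply Rabs_def2 in H1. apply Rabs_def2 in H2. apply Rabs_def1;
  unfold Rmax; destruct (Rle_dec a b); destruct (Rle_dec a' b'); lra.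
Qed.

Lemma Good_bin (op : R -> R -> R) (zop : Z -> Z -> Z) G1 G2 :
  (forall a b a' b' e, Rabs (a - a') < e -> Rabs (b - b') < e -> Rabs (op a b - op a' b') < e) ->
  (forall a b, zfloor (op a b) = zop (zfloor a) (zfloor b)) ->
  Good G1 -> Good G2 -> Good (fun x => op (G1 x) (G2 x)).
Proof.
  intros Hc Hf [C1 F1] [C2 F2]. split.
  - intros x e He. destruct (C1 x e He) as [d1 [Hd1 H1]]. destruct (C2 x e He) as [d2 [Hd2 H2]].
    exists (Rmin d1 d2). split. apply Rmin_glb_lt; auto.
    intros x' Hx'. apply Hc; [apply H1|apply H2]; eapply Rlt_le_trans; eauto;
      [apply Rmin_l|apply Rmin_r].
  - intros x. destruct (F1 x) as [e1 [L1 [R1 [He1 [A1 B1]]]]].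
    destruct (F2 x) as [e2 [L2 [R2 [He2 [A2 B2]]]]].
    exists (Rmin e1 e2), (zop L1 L2), (zop R1 R2). 
    pose proof (Rmin_l e1 e2). pose proof (Rmin_r e1 e2).
    split. apply Rmin_glb_lt; auto. split.
    + intros x' Hx'. rewrite Hf, A1, A2; auto; lra.
    + intros x' Hx'. rewrite Hf, B1, B2; auto; lra.
Qed.

Lemma Good_min G1 G2 : Good G1 -> Good G2 -> Good (fun x => Rmin (G1 x) (G2 x)).
Proof. apply Good_bin with (zop := Z.min). apply Rabs_min_le. apply zfloor_min. Qed.
Lemma Good_max G1 G2 : Good G1 -> Good G2 -> Good (fun x => Rmax (G1 x) (G2 x)).
Proof. apply Good_bin with (zop := Z.max). apply Rabs_max_le. apply zfloor_max. Qed.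

Definition LocPL (I : R -> R) : Prop :=
  forall x, exists eps s1 s2, 0 < eps /\ forall t, 0 <= t < eps ->
    I (x + t) = I x + s2 * t /\ I (x - t) = I x - s1 * t.

Lemma LocPL_Good I : LocPL I -> Good I.
Proof.
  intros H. split.
  - intros x e He. destruct (H x) as [eps [s1 [s2 [Heps Hs]]]].
    set (d := Rmin eps (e / (Rabs s1 + Rabs s2 + 1))).
    assert (Hd0 : 0 < e / (Rabs s1 + Rabs s2 + 1)).
    { apply Rdiv_lt_0_compat; auto. pose proof (Rabs_pos s1). pose proof (Rabs_pos s2). lra. }
    exists d. split. apply Rmin_glb_lt; auto.
    intros x' Hx'. assert (Hd1 : d <= eps) by apply Rmin_l.
    assert (Hd2 : d <= e / (Rabs s1 + Rabs s2 + 1)) by apply Rmin_r.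
    assert (Hk : forall s t, 0 <= t < d -> Rabs s <= Rabs s1 + Rabs s2 -> Rabs (s * t) < e).
    { intros s t Ht Hs'. rewrite Rabs_mult. rewrite (Rabs_right t) by lra.
      assert (Rabs s * t <= (Rabs s1 + Rabs s2) * t) by (apply Rmult_le_compat_r; lra).
      assert ((Rabs s1 + Rabs s2) * t < e).
      { assert (Ht2 : t < e / (Rabs s1 + Rabs s2 + 1)) by lra.
        pose proof (Rabs_pos s1). pose proof (Rabs_pos s2).
        apply (Rmult_lt_compat_l (Rabs s1 + Rabs s2 + 1)) in Ht2; [|lra].
        field_simplify in Ht2; [|lra].
        assert ((Rabs s1 + Rabs s2) * t <= (Rabs s1 + Rabs s2 + 1) * t) by (apply Rmult_le_compat_r; lra).
        lra. }
      lra. }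
    pose proof (Rabs_pos s1). pose proof (Rabs_pos s2).
    destruct (Rle_dec x x') as [Hle|Hle].
    + rewrite Rabs_right in Hx' by lra.
      destruct (Hs (x' - x)) as [E _]. lra. replace (x + (x' - x)) with x' in E by ring.
      rewrite E. replace (I x + s2 * (x' - x) - I x) with (s2 * (x' - x)) by ring.
      apply Hk; lra.
    + rewrite Rabs_left in Hx' by lra.
      destruct (Hs (x - x')) as [_ E]. lra. replace (x - (x - x')) with x' in E by ring.
      rewrite E. replace (I x - s1 * (x - x') - I x) with ((- s1) * (x - x')) by ring.
      apply Hk. lra. rewrite Rabs_Ropp. lra.
  - intros x. destruct (H x) as [eps [s1 [s2 [Heps Hs]]]].
    destruct (floor_affine (I x) s2) as [e2 [R2 [He2 H2]]].
    destruct (floor_affine (I x) (- s1)) as [e1 [L1 [He1 H1]]].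
    exists (Rmin eps (Rmin e1 e2)), L1, R2.
    pose proof (Rmin_l eps (Rmin e1 e2)). pose proof (Rmin_r eps (Rmin e1 e2)).
    pose proof (Rmin_l e1 e2). pose proof (Rmin_r e1 e2).
    split. repeat apply Rmin_glb_lt; auto. split.
    + intros x' Hx'. destruct (Hs (x - x')) as [_ E]. lra.
      replace (x - (x - x')) with x' in E by ring. rewrite E.
      replace (I x - s1 * (x - x')) with (I x + - s1 * (x - x')) by ring. apply H1. lra.
    + intros x' Hx'. destruct (Hs (x' - x)) as [E _]. lra.
      replace (x + (x' - x)) with x' in E by ring. rewrite E. apply H2. lra.
Qed.

Lemma div_le1 c a M : 0 < M -> c / M <= a -> c <= a * M.
Proof. intros HM H. apply (Rmult_le_compat_r M) in H; [|lra]. field_simplify in H; lra. Qed.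
Lemma div_lt1 c a M : 0 < M -> a < c / M -> a * M < c.
Proof. intros HM H. apply (Rmult_lt_compat_r M) in H; [|lra]. field_simplify in H; lra. Qed.
Lemma div_le2 c a M : 0 < M -> c <= a * M -> c / M <= a.
Proof. intros HM H. apply (Rmult_le_compat_r (/M)) in H; [|left; apply Rinv_0_lt_compat; lra].
  replace (a * M * / M) with a in H by (field; lra). unfold Rdiv. lra. Qed.
Lemma div_lt2 c a M : 0 < M -> a * M < c -> a < c / M.
Proof. intros HM H. apply (Rmult_lt_compat_r (/M)) in H; [|apply Rinv_0_lt_compat; lra].
  replace (a * M * / M) with a in H by (field; lra). unfold Rdiv. lra. Qed.

Section Interp.
Variable g : R -> R.
Variable N : Z -> nat.
Hypothesis HN : forall j, (1 <= N j)%nat.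

Definition pinterp (x : R) : R :=
  let j := zfloor x in let M := INR (N j) in let u := (x - IZR j) * M in let i := zfloor u in
  g (IZR j + IZR i / M) + (u - IZR i) * (g (IZR j + (IZR i + 1) / M) - g (IZR j + IZR i / M)).

Lemma Mpos j : 0 < INR (N j).
Proof. apply lt_0_INR. specialize (HN j). lia. Qed.

Lemma interp_cell j i x : (0 <= i < Z.of_nat (N j))%Z ->
  IZR j + IZR i / INR (N j) <= x < IZR j + (IZR i + 1) / INR (N j) ->
  pinterp x = g (IZR j + IZR i / INR (N j)) + ((x - IZR j) * INR (N j) - IZR i) *
     (g (IZR j + (IZR i + 1) / INR (N j)) - g (IZR j + IZR i / INR (N j))).
Proof.
  intros Hi Hx. pose proof (Mpos j) as HM.
  assert (Hi1 : IZR i + 1 <= INR (N j)).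
  { rewrite INR_IZR_INZ. replace (IZR i + 1) with (IZR (i+1)) by (rewrite plus_IZR; auto).
    apply IZR_le. lia. }
  assert (H0 : 0 <= IZR i) by (apply IZR_le; lia).
  assert (Hj : zfloor x = j).
  { apply zfloor_unique. split.
    - assert (0 <= IZR i / INR (N j)) by (apply Rdiv_le_0_compat; lra). lra.
    - assert ((IZR i + 1) / INR (N j) <= 1). { apply div_le2; lra. }
      lra. }
  assert (Hu : zfloor ((x - IZR j) * INR (N j)) = i).
  { apply zfloor_unique. split.
    - apply div_le1; auto. lra.
    - apply div_lt1; auto. lra. }
  unfold pinterp. rewrite Hj. rewrite Hu. reflexivity.
Qed.

Lemma interp_locate x : exists j i, (0 <= i < Z.of_nat (N j))%Z /\
  IZR j + IZR i / INR (N j) <= x < IZR j + (IZR i + 1) / INR (N j) /\ zfloor x = j /\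
  zfloor ((x - IZR j) * INR (N j)) = i.
Proof.
  set (j := zfloor x). pose proof (Mpos j) as HM. set (M := INR (N j)) in *.
  set (i := zfloor ((x - IZR j) * M)).
  exists j, i. destruct (zfloor_spec x) as [X1 X2]. fold j in X1, X2.
  destruct (zfloor_spec ((x - IZR j) * M)) as [U1 U2]. fold i in U1, U2.
  assert (0 <= (x - IZR j) * M) by (apply Rmult_le_pos; lra).
  assert ((x - IZR j) * M < M). { assert (x - IZR j < 1) by lra.
    apply (Rmult_lt_compat_r M) in H0; lra. }
  split; [|split; [|split; reflexivity]].
  - split.
    + apply le_IZR. simpl. assert (IZR (-1) < IZR i) by (simpl; lra). apply lt_IZR in H1. 
      apply IZR_le. lia.
    + apply lt_IZR. rewrite <- INR_IZR_INZ. fold M. lra.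
  - split.
    + apply div_le2 in U1; auto. fold M. lra.
    + apply div_lt2 in U2; auto. fold M. lra.
Qed.

Lemma interp_right x : exists eps s, 0 < eps /\ forall t, 0 <= t < eps -> pinterp (x + t) = pinterp x + s * t.
Proof.
  destruct (interp_locate x) as [j [i [Hi [Hx _]]]].
  set (M := INR (N j)) in *. pose proof (Mpos j) as HM. fold M in HM.
  exists (IZR j + (IZR i + 1) / M - x), (M * (g (IZR j + (IZR i + 1) / M) - g (IZR j + IZR i / M))).
  split. lra. intros t Ht.
  rewrite (interp_cell j i (x + t)) by (auto; unfold M in *; lra). rewrite (interp_cell j i x) by auto.
  fold M. ring.
Qed.

Lemma interp_left_end j i x : (0 <= i < Z.of_nat (N j))%Z ->
  x = IZR j + (IZR i + 1) / INR (N j) -> pinterp x = g x ->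
  exists eps s, 0 < eps /\ forall t, 0 <= t < eps -> pinterp (x - t) = pinterp x - s * t.
Proof.
  intros Hi Hx Hg. set (M := INR (N j)) in *. pose proof (Mpos j) as HM. fold M in HM.
  exists (/ M), (M * (g x - g (IZR j + IZR i / M))). split. apply Rinv_0_lt_compat; auto.
  intros t [Ht0 Ht]. destruct Ht0 as [Ht0|Ht0].
  - rewrite (interp_cell j i (x - t)); auto.
    + fold M. rewrite <- Hx. rewrite Hg. subst x. field. lra.
    + fold M. split.
      * assert (t * M < 1). { apply (Rmult_lt_compat_r M) in Ht; auto. rewrite Rinv_l in Ht; lra. }
        assert (/ M * M = 1) by (apply Rinv_l; lra).
        assert ((IZR i + 1) / M = IZR i / M + / M) by (field; lra).
        rewrite Hx. rewrite H1. lra.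
      * lra.
  - subst t. replace (x - 0) with x by ring. ring.
Qed.

Lemma interp_left x : exists eps s, 0 < eps /\ forall t, 0 <= t < eps -> pinterp (x - t) = pinterp x - s * t.
Proof.
  destruct (interp_locate x) as [j [i [Hi [Hx [Ej Ei]]]]].
  set (M := INR (N j)) in *. pose proof (Mpos j) as HM. fold M in HM.
  destruct (Rlt_dec (IZR j + IZR i / M) x) as [Hlt|Hnlt].
  - exists (x - (IZR j + IZR i / M)), (M * (g (IZR j + (IZR i + 1) / M) - g (IZR j + IZR i / M))).
    split. lra. intros t Ht.
    rewrite (interp_cell j i (x - t)) by (auto; unfold M in *; lra). rewrite (interp_cell j i x) by auto.
    fold M. ring.
  - assert (Hxp : x = IZR j + IZR i / M) by lra.
    assert (Hg : pinterp x = g x).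
    { rewrite (interp_cell j i x) by auto. fold M. rewrite <- Hxp.
      replace ((x - IZR j) * M - IZR i) with 0. ring. rewrite Hxp. field. lra. }
    destruct (Z.eq_dec i 0) as [Hi0|Hi0].
    + rewrite Hi0 in Hxp. pose proof (HN (j - 1)%Z) as HN'.
      apply (interp_left_end (j-1) (Z.of_nat (N (j-1)) - 1)); auto.
      * lia.
      * rewrite Hxp. rewrite minus_IZR. rewrite minus_IZR. rewrite <- INR_IZR_INZ. simpl.
        pose proof (Mpos (j-1)). field. lra.
    + apply (interp_left_end j (i - 1)); auto.
      * lia.
      * rewrite Hxp. rewrite minus_IZR. simpl. fold M. field. lra.
Qed.

Lemma interp_LocPL : LocPL pinterp.
Proof.
  intros x. destruct (interp_right x) as [e2 [s2 [He2 H2]]].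
  destruct (interp_left x) as [e1 [s1 [He1 H1]]].
  exists (Rmin e1 e2), s1, s2. pose proof (Rmin_l e1 e2). pose proof (Rmin_r e1 e2).
  split. apply Rmin_glb_lt; auto. intros t Ht. split; [apply H2|apply H1]; lra.
Qed.

Lemma interp_err e x :
  (forall j a b, IZR j <= a <= IZR j + 1 -> IZR j <= b <= IZR j + 1 ->
     Rabs (a - b) <= / INR (N j) -> Rabs (g a - g b) <= e) ->
  Rabs (pinterp x - g x) <= e.
Proof.
  intros He. destruct (interp_locate x) as [j [i [Hi [Hx [Ej Ei]]]]].
  set (M := INR (N j)) in *. pose proof (Mpos j) as HM. fold M in HM.
  rewrite (interp_cell j i x) by auto. fold M.
  set (p := IZR j + IZR i / M) in *. set (q := IZR j + (IZR i + 1) / M) in *.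
  assert (Hi1 : IZR i + 1 <= M).
  { unfold M. rewrite INR_IZR_INZ. replace (IZR i + 1) with (IZR (i+1)) by (rewrite plus_IZR; auto).
    apply IZR_le. lia. }
  assert (H0 : 0 <= IZR i) by (apply IZR_le; lia).
  assert (Hp : IZR j <= p) by (unfold p; assert (0 <= IZR i / M) by (apply Rdiv_le_0_compat; lra); lra).
  assert (Hq : q <= IZR j + 1).
  { unfold q. assert ((IZR i + 1) / M <= 1). { apply div_le2; lra. } lra. }
  assert (Hqp : q - p = / M) by (unfold q, p; field; lra).
  assert (Ex : (x - IZR j) * M - IZR i = (x - p) * M) by (unfold p; field; lra).
  rewrite Ex.
  assert (L0 : 0 <= (x - p) * M) by (apply Rmult_le_pos; lra).
  assert (L1 : (x - p) * M <= 1).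
  { assert (x - p <= / M) by lra. apply (Rmult_le_compat_r M) in H; [|lra].
    rewrite Rinv_l in H; lra. }
  assert (A1 : Rabs (g p - g x) <= e). { apply (He j); fold M; try lra. rewrite Rabs_left1; lra. }
  assert (A2 : Rabs (g q - g x) <= e). { apply (He j); fold M; try lra. rewrite Rabs_right; lra. }
  set (l := (x - p) * M) in *.
  apply Rabs_le_inv in A1. apply Rabs_le_inv in A2.
  apply Rabs_le. split; nra.
Qed.

End Interp.

Definition spike (G : R -> R) (x : R) : Prop := exists eps, 0 < eps /\
  forall x', 0 < Rabs (x' - x) < eps -> (zfloor (G x') < zfloor (G x))%Z.

Definition hrow (G : R -> R) (x : R) : Z :=
  (zfloor (G x) - if excluded_middle_informative (spike G x) then 1 else 0)%Z.

Lemma key G (HG : Good G) x : exists eps L Rv, 0 < eps /\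
  (forall x', x - eps < x' < x -> zfloor (G x') = L /\ hrow G x' = L) /\
  (forall x', x < x' < x + eps -> zfloor (G x') = Rv /\ hrow G x' = Rv) /\
  hrow G x = Z.max L Rv /\
  (zfloor (G x) - 1 <= L <= zfloor (G x))%Z /\
  (zfloor (G x) - 1 <= Rv <= zfloor (G x))%Z /\
  G x - 1 <= IZR (hrow G x) <= G x.
Proof.
  destruct HG as [C F]. destruct (F x) as [eps0 [L [Rv [He0 [HL HR]]]]].
  set (fl := zfloor (G x)). destruct (zfloor_spec (G x)) as [S1 S2]. fold fl in S1, S2.
  destruct (C x (Rmin 1 (IZR fl + 1 - G x))) as [d [Hd Hc]].
  { apply Rmin_glb_lt; lra. }
  set (eps := Rmin eps0 d).
  assert (Heps : 0 < eps) by (apply Rmin_glb_lt; auto).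
  assert (E1 : eps <= eps0) by apply Rmin_l. assert (E2 : eps <= d) by apply Rmin_r.
  assert (Bnd : forall x', Rabs (x' - x) < eps -> (fl - 1 <= zfloor (G x') <= fl)%Z).
  { intros x' Hx'. assert (Hc' := Hc x' ltac:(lra)).
    apply Rabs_lt_inv in Hc'. pose proof (Rmin_l 1 (IZR fl + 1 - G x)).
    pose proof (Rmin_r 1 (IZR fl + 1 - G x)). split.
    - apply zfloor_ge. rewrite minus_IZR. simpl. lra.
    - destruct (zfloor_spec (G x')). assert (IZR (zfloor (G x')) < IZR (fl + 1)).
      rewrite plus_IZR. simpl. lra. apply lt_IZR in H3. lia. }
  assert (HLb : (fl - 1 <= L <= fl)%Z).
  { rewrite <- (HL (x - eps / 2)) by lra. apply Bnd. rewrite Rabs_left; lra. }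
  assert (HRb : (fl - 1 <= Rv <= fl)%Z).
  { rewrite <- (HR (x + eps / 2)) by lra. apply Bnd. rewrite Rabs_right; lra. }
  assert (NSL : forall x', x - eps < x' < x -> hrow G x' = L).
  { intros x' Hx'. unfold hrow. destruct (excluded_middle_informative (spike G x')) as [[e' [He' Hs]]|Hn].
    - exfalso. set (m := Rmin e' (x' - (x - eps))).
      assert (0 < m) by (apply Rmin_glb_lt; lra).
      assert (m <= e') by apply Rmin_l. assert (m <= x' - (x - eps)) by apply Rmin_r.
      specialize (Hs (x' - m / 2)). rewrite (HL x') in Hs by lra. rewrite (HL (x' - m/2)) in Hs by lra.
      assert (L < L)%Z; [|lia]. apply Hs. rewrite Rabs_left by lra. lra.
    - rewrite HL by lra. lia. }
  assert (NSR : forall x', x < x' < x + eps -> hrow G x' = Rv).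
  { intros x' Hx'. unfold hrow. destruct (excluded_middle_informative (spike G x')) as [[e' [He' Hs]]|Hn].
    - exfalso. set (m := Rmin e' (x + eps - x')).
      assert (0 < m) by (apply Rmin_glb_lt; lra).
      assert (m <= e') by apply Rmin_l. assert (m <= x + eps - x') by apply Rmin_r.
      specialize (Hs (x' + m / 2)). rewrite (HR x') in Hs by lra. rewrite (HR (x' + m/2)) in Hs by lra.
      assert (Rv < Rv)%Z; [|lia]. apply Hs. rewrite Rabs_right by lra. lra.
    - rewrite HR by lra. lia. }
  exists eps, L, Rv. split; auto. split.
  { intros x' Hx'. split. apply HL; lra. apply NSL; auto. } split.
  { intros x' Hx'. split. apply HR; lra. apply NSR; auto. }
  unfold hrow. fold fl.
  destruct (excluded_middle_informative (spike G x)) as [[e' [He' Hs]]|Hn].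
  - set (m := Rmin eps e'). assert (0 < m) by (apply Rmin_glb_lt; lra).
    assert (m <= eps) by apply Rmin_l. assert (m <= e') by apply Rmin_r.
    assert (L < fl)%Z. { rewrite <- (HL (x - m/2)) by lra. apply Hs. rewrite Rabs_left; lra. }
    assert (Rv < fl)%Z. { rewrite <- (HR (x + m/2)) by lra. apply Hs. rewrite Rabs_right; lra. }
    assert (Gx : G x <= IZR fl).
    { destruct (Rle_dec (G x) (IZR fl)) as [|Hgt]; auto. exfalso.
      destruct (C x (G x - IZR fl)) as [d' [Hd' Hc']]. lra.
      set (m' := Rmin m d'). assert (0 < m') by (apply Rmin_glb_lt; lra).
      assert (m' <= m) by apply Rmin_l. assert (m' <= d') by apply Rmin_r.
      specialize (Hc' (x - m'/2)). assert (Hc'' : Rabs (G (x - m' / 2) - G x) < G x - IZR fl).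
      apply Hc'. rewrite Rabs_left; lra. apply Rabs_lt_inv in Hc''.
      assert (Hfl : (fl <= zfloor (G (x - m'/2)%R))%Z) by (apply zfloor_ge; lra).
      rewrite (HL (x - m'/2)) in Hfl by lra. lia. }
    split. lia. split. lia. split. lia. rewrite minus_IZR. simpl. lra.
  - assert (Hm : Z.max L Rv = fl).
    { destruct (Z.eq_dec L fl); destruct (Z.eq_dec Rv fl); try lia. exfalso. apply Hn.
      exists eps. split; auto. intros x' [H0 H1]. destruct (Rle_dec x' x).
      - rewrite Rabs_left1 in H0, H1 by lra. rewrite HL by lra. lia.
      - rewrite Rabs_right in H0, H1 by lra. rewrite HR by lra. lia. }
    split. lia. split. lia. split. lia. rewrite Z.sub_0_r. lra.
Qed.

Lemma hrow_pw G : Good G -> pw_const_unit_jumps (hrow G).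
Proof.
  intros HG x. destruct (key G HG x) as [eps [L [Rv [He [HL [HR [Hm [HLb [HRb _]]]]]]]]].
  exists eps, L, Rv. split; auto. split. intros; apply HL; auto. split. intros; apply HR; auto.
  split. apply Z.abs_le. lia. lia.
Qed.

Lemma hrow_usc G : Good G -> usc (hrow G).
Proof.
  intros HG x t Ht. destruct (key G HG x) as [eps [L [Rv [He [HL [HR [Hm [HLb [HRb _]]]]]]]]].
  exists eps. split; auto. intros x' Hx'. apply Rabs_lt_inv in Hx'.
  destruct (Rtotal_order x' x) as [H|[H|H]].
  - destruct (HL x') as [_ E]. lra. rewrite E. 
    assert (IZR L <= IZR (hrow G x)) by (apply IZR_le; lia). lra.
  - subst; auto.
  - destruct (HR x') as [_ E]. lra. rewrite E.
    assert (IZR Rv <= IZR (hrow G x)) by (apply IZR_le; lia). lra.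
Qed.

Lemma hrow_bound G x : Good G -> G x - 1 <= IZR (hrow G x) <= G x.
Proof. intros HG. destruct (key G HG x) as [eps [L [Rv [He [HL [HR [Hm [HLb [HRb B]]]]]]]]]. auto. Qed.

Lemma hrow_couple G1 G2 x : Good G1 -> Good G2 -> (forall x, G1 x - 1 <= G2 x <= G1 x) ->
  (hrow G2 x - hrow G1 x = -1 \/ hrow G2 x - hrow G1 x = 0)%Z.
Proof.
  intros H1 H2 Hc.
  destruct (key G1 H1 x) as [e1 [L1 [R1 [He1 [HL1 [HR1 [Hm1 _]]]]]]].
  destruct (key G2 H2 x) as [e2 [L2 [R2 [He2 [HL2 [HR2 [Hm2 _]]]]]]].
  set (m := Rmin e1 e2). assert (0 < m) by (apply Rmin_glb_lt; lra).
  assert (m <= e1) by apply Rmin_l. assert (m <= e2) by apply Rmin_r.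
  assert (F : forall y, (zfloor (G1 y) - 1 <= zfloor (G2 y) <= zfloor (G1 y))%Z).
  { intros y. destruct (Hc y). split.
    - replace (zfloor (G1 y) - 1)%Z with (zfloor (G1 y + IZR (-1))) by (rewrite zfloor_plus; lia).
      apply zfloor_mono. simpl. lra.
    - apply zfloor_mono; auto. }
  assert (A : (L1 - 1 <= L2 <= L1)%Z).
  { destruct (HL1 (x - m/2)) as [E1 _]. lra. destruct (HL2 (x - m/2)) as [E2 _]. lra.
    rewrite <- E1, <- E2. apply F. }
  assert (B : (R1 - 1 <= R2 <= R1)%Z).
  { destruct (HR1 (x + m/2)) as [E1 _]. lra. destruct (HR2 (x + m/2)) as [E2 _]. lra.
    rewrite <- E1, <- E2. apply F. }
  rewrite Hm1, Hm2. lia.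
Qed.

Lemma ed_cont g x : (forall e, 0 < e -> exists d, 0 < d /\ forall x', Rabs (x' - x) < d -> Rabs (g x' - g x) < e) -> continuity_pt g x.
Proof.
intros H. unfold continuity_pt, continue_in, limit1_in, limit_in. simpl. unfold R_dist.
intros e He. destruct (H e He) as [d [Hd Hx]]. exists d. split; auto. intros x' [_ Hx']. auto.
Qed.

Lemma clamp_err lo hi v a e : lo <= hi -> Rabs (v - a) <= e -> a - e <= hi -> lo <= a + e ->
  Rabs (Rmax lo (Rmin v hi) - a) <= e.
Proof.
  intros H1 H2 H3 H4. apply Rabs_le_inv in H2. apply Rabs_le.
  unfold Rmax, Rmin. destruct (Rle_dec v hi); destruct (Rle_dec lo v); destruct (Rle_dec lo hi); lra.
Qed.

Lemma clamp_range lo hi v : lo <= hi -> lo <= Rmax lo (Rmin v hi) <= hi.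
Proof. intros H. unfold Rmax, Rmin. destruct (Rle_dec v hi); destruct (Rle_dec lo v); destruct (Rle_dec lo hi); lra. Qed.

Section Build.
Variable n : nat.
Hypothesis Hn : (1 <= n)%nat.
Variable f : R -> R -> R.

Definition row (k : Z) (x : R) : R := INR n * f (x / INR n) (IZR k / INR n).

Definition Pres (k j : Z) (N : nat) : Prop := (1 <= N)%nat /\
  forall a b, IZR j <= a <= IZR j + 1 -> IZR j <= b <= IZR j + 1 ->
    Rabs (a - b) <= / INR N -> Rabs (row k a - row k b) <= / 2.

Definition Nres (k j : Z) : nat := epsilon (inhabits 1%nat) (Pres k j).

Definition Irow (k : Z) : R -> R := pinterp (row k) (Nres k).

Fixpoint Gpos (m : nat) : R -> R :=
  match m with
  | O => Irow 0
  | S m' => fun x => Rmax (Gpos m' x - 1) (Rmin (Irow (Z.of_nat (S m')) x) (Gpos m' x))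
  end.

Fixpoint Gneg (m : nat) : R -> R :=
  match m with
  | O => Irow 0
  | S m' => fun x => Rmax (Gneg m' x) (Rmin (Irow (- Z.of_nat (S m')) x) (Gneg m' x + 1))
  end.

Definition Grow (y : Z) : R -> R := if Z.leb 0 y then Gpos (Z.to_nat y) else Gneg (Z.to_nat (- y)).

Definition build (x : R) (y : Z) : Z := hrow (Grow y) x.

Hypothesis Hf : Gammabar f.

Lemma INRn_pos : 0 < INR n.
Proof. apply lt_0_INR. lia. Qed.

Lemma row_cont k x : continuity_pt (row k) x.
Proof.
  apply ed_cont. intros e He. pose proof INRn_pos as HN.
  destruct Hf as [Hc _]. destruct (Hc (x / INR n) (IZR k / INR n) (mkposreal (e / INR n) ltac:(apply Rdiv_lt_0_compat; lra))) as [d Hd].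
  exists (INR n * d). split. apply Rmult_lt_0_compat; auto. apply cond_pos.
  intros x' Hx'. unfold row. rewrite <- Rmult_minus_distr_l. rewrite Rabs_mult, Rabs_right by lra.
  assert (Rabs (f (x' / INR n) (IZR k / INR n) - f (x / INR n) (IZR k / INR n)) < e / INR n).
  { apply (Hd (x' / INR n) (IZR k / INR n)).
    - replace (x' / INR n - x / INR n) with ((x' - x) / INR n) by (field; lra).
      unfold Rdiv. rewrite Rabs_mult, (Rabs_right (/ INR n)).
      2: left; apply Rinv_0_lt_compat; auto.
      apply (Rmult_lt_reg_r (INR n)); auto. rewrite Rmult_assoc, Rinv_l by lra. lra.
    - replace (IZR k / INR n - IZR k / INR n) with 0 by ring. rewrite Rabs_R0. apply cond_pos. }
  apply (Rmult_lt_compat_l (INR n)) in H; auto. replace (INR n * (e / INR n)) with e in H by (field; lra). lra.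
Qed.

Lemma Nres_spec k j : Pres k j (Nres k j).
Proof.
  unfold Nres. apply epsilon_spec.
  pose proof (Heine (row k) (fun c => IZR j <= c <= IZR j + 1) (compact_P3 _ _) (fun x _ => row_cont k x)) as U.
  destruct (U (mkposreal (/2) ltac:(lra))) as [d Hd].
  destruct (archimed_cor1 d (cond_pos d)) as [N [HN1 HN2]].
  exists N. split. lia. intros a b Ha Hb Hab. left. apply Hd; auto. lra.
Qed.

Lemma Irow_good k : Good (Irow k).
Proof.
  apply LocPL_Good. apply interp_LocPL. intros j. apply (Nres_spec k j).
Qed.

Lemma Irow_err k x : Rabs (Irow k x - row k x) <= / 2.
Proof.
  apply interp_err. intros j. apply (Nres_spec k j). intros j a b Ha Hb Hab. apply (Nres_spec k j); auto.
Qed.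

Lemma row_couple k x : row k x - 1 <= row (k + 1) x <= row k x.
Proof.
  pose proof INRn_pos as HN. destruct Hf as [_ Hm]. unfold row.
  destruct (Hm (x / INR n) (IZR k / INR n) (IZR (k+1) / INR n)) as [A B].
  { rewrite plus_IZR. apply Rmult_le_compat_r. left; apply Rinv_0_lt_compat; auto. simpl; lra. }
  replace (IZR (k + 1) / INR n - IZR k / INR n) with (/ INR n) in A by (rewrite plus_IZR; field; lra).
  apply (Rmult_le_compat_l (INR n)) in A; [|lra]. apply (Rmult_le_compat_l (INR n)) in B; [|lra].
  replace (INR n * - / INR n) with (-1) in A by (field; lra). split; nra.
Qed.

Lemma Gpos_good m : Good (Gpos m).
Proof.
  induction m; simpl. apply Irow_good.
  apply Good_max. apply Good_ext with (fun x => Gpos m x + IZR (-1)). intros; simpl; ring.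
  apply Good_plus; auto. apply Good_min; auto. apply Irow_good.
Qed.

Lemma Gneg_good m : Good (Gneg m).
Proof.
  induction m; simpl. apply Irow_good.
  apply Good_max; auto. apply Good_min. apply Irow_good.
  apply Good_ext with (fun x => Gneg m x + IZR 1). intros; simpl; ring.
  apply Good_plus; auto.
Qed.

Lemma Grow_good y : Good (Grow y).
Proof. unfold Grow. destruct (Z.leb 0 y). apply Gpos_good. apply Gneg_good. Qed.

Lemma Gpos_err m x : Rabs (Gpos m x - row (Z.of_nat m) x) <= / 2.
Proof.
  induction m. apply Irow_err. cbn [Gpos].
  pose proof (Irow_err (Z.of_nat (S m)) x) as E.
  pose proof (row_couple (Z.of_nat m) x) as Rc. replace (Z.of_nat m + 1)%Z with (Z.of_nat (S m)) in Rc by lia.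
  pose proof (Rabs_le_inv _ _ IHm).
  apply clamp_err; auto; lra.
Qed.

Lemma Gneg_err m x : Rabs (Gneg m x - row (- Z.of_nat m) x) <= / 2.
Proof.
  induction m. apply Irow_err. cbn [Gneg].
  pose proof (Irow_err (- Z.of_nat (S m)) x) as E.
  pose proof (row_couple (- Z.of_nat (S m)) x) as Rc.
  replace (- Z.of_nat (S m) + 1)%Z with (- Z.of_nat m)%Z in Rc by lia.
  pose proof (Rabs_le_inv _ _ IHm).
  apply clamp_err; auto; lra.
Qed.

Lemma Grow_err y x : Rabs (Grow y x - row y x) <= / 2.
Proof.
  unfold Grow. destruct (Z.leb 0 y) eqn:E.
  - apply Z.leb_le in E. pose proof (Gpos_err (Z.to_nat y) x). rewrite Z2Nat.id in H by lia. auto.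
  - apply Z.leb_gt in E. pose proof (Gneg_err (Z.to_nat (- y)) x). rewrite Z2Nat.id in H by lia.
    replace (- - y)%Z with y in H by lia. auto.
Qed.

Lemma Grow_couple y x : Grow y x - 1 <= Grow (y + 1) x <= Grow y x.
Proof.
  unfold Grow. destruct (Z.leb 0 y) eqn:E.
  - apply Z.leb_le in E. replace (Z.leb 0 (y+1)) with true by (symmetry; apply Z.leb_le; lia).
    replace (Z.to_nat (y + 1)) with (S (Z.to_nat y)) by lia. simpl.
    apply clamp_range. lra.
  - apply Z.leb_gt in E. destruct (Z.eq_dec y (-1)) as [Em|Em].
    + subst. simpl. pose proof (clamp_range (Irow 0 x) (Irow 0 x + 1) (Irow (-1) x)). lra.
    + replace (Z.leb 0 (y+1)) with false by (symmetry; apply Z.leb_gt; lia).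
      replace (Z.to_nat (- y)) with (S (Z.to_nat (- (y + 1)))) by lia. simpl.
      pose proof (clamp_range (Gneg (Z.to_nat (- (y + 1))) x) (Gneg (Z.to_nat (- (y + 1))) x + 1)
        (Irow (Z.neg (Pos.of_succ_nat (Z.to_nat (- (y + 1))))) x)). lra.
Qed.

Lemma build_Gamma : Gamma build.
Proof.
  split.
  - intros y. split. apply hrow_pw, Grow_good. apply hrow_usc, Grow_good.
  - intros x y. unfold build. apply hrow_couple; try apply Grow_good. intros; apply Grow_couple.
Qed.

Lemma build_err x y :
  Rabs (/ INR n * IZR (build (INR n * x) (zfloor (INR n * y))) - f x y) <= 2 / INR n.
Proof.
  pose proof INRn_pos as HN. set (k := zfloor (INR n * y)). unfold build.
  pose proof (hrow_bound (Grow k) (INR n * x) (Grow_good k)) as B.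
  pose proof (Rabs_le_inv _ _ (Grow_err k (INR n * x))) as E.
  unfold row in E. replace (INR n * x / INR n) with x in E by (field; lra).
  destruct (zfloor_spec (INR n * y)) as [K1 K2]. fold k in K1, K2.
  destruct Hf as [_ Hm].
  destruct (Hm x (IZR k / INR n) y) as [M1 M2].
  { apply div_le2; lra. }
  assert (y - IZR k / INR n < / INR n).
  { apply (Rmult_lt_reg_l (INR n)); auto. field_simplify; lra. }
  set (h := IZR (hrow (Grow k) (INR n * x))) in *.
  set (fk := f x (IZR k / INR n)) in *.
  assert (Z1 : INR n * (y - IZR k / INR n) < 1).
  { apply (Rmult_lt_compat_l (INR n)) in H; auto. rewrite Rinv_r in H; lra. }
  assert (Z2 : INR n * (f x y - fk) <= 0) by nra.
  assert (Z3 : - 1 < INR n * (f x y - fk)) by nra.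
  replace (/ INR n * h - f x y) with (/ INR n * (h - INR n * f x y)) by (field; lra).
  rewrite Rabs_mult, Rabs_right by (left; apply Rinv_0_lt_compat; auto).
  unfold Rdiv. rewrite (Rmult_comm 2). apply Rmult_le_compat_l. left; apply Rinv_0_lt_compat; auto.
  apply Rabs_le. nra.
Qed.

End Build.

Lemma Gammabar_shift f c : Gammabar f -> Gammabar (fun u v => f u v - c).
Proof.
  intros [Hc Hm]. split.
  - intros x y eps. destruct (Hc x y eps) as [d Hd]. exists d. intros u v Hu Hv.
    replace (f u v - c - (f x y - c)) with (f u v - f x y) by ring. auto.
  - intros x y1 y2 H. replace (f x y2 - c - (f x y1 - c)) with (f x y2 - f x y1) by ring. auto.
Qed.

Lemma Gamma_shift h K : Gamma h -> Gamma (fun x y => (h x y + K)%Z).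
Proof.
  intros [H1 H2]. split.
  - intros y. destruct (H1 y) as [P U]. split.
    + intros x. destruct (P x) as [eps [L [Rv [He [A [B [C D]]]]]]].
      exists eps, (L + K)%Z, (Rv + K)%Z. split; auto. split. intros; rewrite A; auto.
      split. intros; rewrite B; auto. split. replace (L + K - (Rv + K))%Z with (L - Rv)%Z by lia; auto.
      destruct D as [D|D]; [left|right]; rewrite D; auto.
    + intros x t Ht. rewrite plus_IZR in Ht. destruct (U x (t - IZR K)) as [d [Hd Hx]]. lra.
      exists d. split; auto. intros x' Hx'. specialize (Hx x' Hx'). rewrite plus_IZR. lra.
  - intros x y. destruct (H2 x y); [left|right]; lia.
Qed.

Definition Kf (n : nat) (f : R -> R -> R) : Z := zfloor (INR n * f 0 0).

Definition phi (n : nat) (f : R -> R -> R) : R -> Z -> Z :=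
  fun x y => (build n (fun u v => (f u v - IZR (Kf n f) / INR n)%R) x y + Kf n f)%Z.

Theorem proposition4p10 :
  forall n : nat, (1 <= n)%nat ->
  exists phi : (R -> R -> R) -> (R -> Z -> Z),
    (forall f, Gammabar f -> Gamma (phi f)) /\
    (forall (c : R) (f : R -> R -> R), Gammabar f ->
       forall (x : R) (y : Z),
         phi (fun u v => f u v + IZR (zfloor (INR n * c)) / INR n) x y
         = (phi f x y + zfloor (INR n * c))%Z) /\
    (forall f, Gammabar f ->
       forall x y : R,
         Rabs (/ INR n * IZR (phi f (INR n * x) (zfloor (INR n * y))) - f x y)
         <= 2 / INR n).
Proof.
  intros n Hn. pose proof (INRn_pos n Hn) as HN. exists (phi n). split; [|split].
  - intros f Hf. unfold phi. apply Gamma_shift. apply build_Gamma; auto. apply Gammabar_shift; auto.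
  - intros c f Hf x y. unfold phi.
    set (J := zfloor (INR n * c)).
    assert (HK : Kf n (fun u v => f u v + IZR J / INR n) = (Kf n f + J)%Z).
    { unfold Kf. rewrite <- zfloor_plus. f_equal. field. lra. }
    rewrite HK.
    replace (fun u v => f u v + IZR J / INR n - IZR (Kf n f + J) / INR n)
      with (fun u v => f u v - IZR (Kf n f) / INR n).
    + lia.
    + apply functional_extensionality; intro u. apply functional_extensionality; intro v.
      rewrite plus_IZR. field. lra.
  - intros f Hf x y. unfold phi.
    pose proof (build_err n Hn (fun u v => f u v - IZR (Kf n f) / INR n) (Gammabar_shift _ _ Hf) x y) as E.
    simpl in E. rewrite plus_IZR.
    replace (/ INR n * (IZR (build n (fun u v => f u v - IZR (Kf n f) / INR n) (INR n * x) (zfloor (INR n * y))) + IZR (Kf n f)) - f x y)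
      with (/ INR n * IZR (build n (fun u v => f u v - IZR (Kf n f) / INR n) (INR n * x) (zfloor (INR n * y))) - (f x y - IZR (Kf n f) / INR n)) by (field; lra).
    exact E.
Qed.
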